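(* Let $k$ be a positive integer. Suppose $(x_i)_{i\ge0}$ is a sequence of integers such that $x_0=1$, $2k\mid x_i$ for all $i\ge1$, and for each $i\ge1$, $4k\mid x_i$ if and only if $i$ is not a power of two. Then for every $n\in\mathbb{N}$, the number $(2k)^{-n}\det[x_{i+j}]_{0\le i,j\le n}$ is an odd integer.
   Context: Powers of two are $1,2,4,8,\ldots$. $\det[x_{i+j}]_{0\le i,j\le n}$ denotes the determinant of the $(n+1)\times(n+1)$ Hankel matrix with $(i,j)$-entry $x_{i+j}$. *)

(* Defs.v *)
From HB Require Import structures.
From mathcomp Require Import all_boot all_order all_algebra.
Set Implicit Arguments. Unset Strict Implicit. Unset Printing Implicit Defensive.
Import Order.TTheory GRing.Theory Num.Theory.

Definition is_pow2 (i : nat) : Prop := exists e : nat, i = (2 ^ e)%N.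

Definition hankel (x : nat -> int) (n : nat) : 'M[int]_(n.+1) :=
  \matrix_(i < n.+1, j < n.+1) x (i + j)%N.

(* Main.v *)
Require Import Defs.
From HB Require Import structures.
From mathcomp Require Import all_boot all_order all_algebra all_fingroup.
From mathcomp Require Import zify.
Import Order.TTheory GRing.Theory Num.Theory.

Definition pw (N : nat) := (2 ^ (trunc_log 2 N).+1)%N.

Fixpoint g (fuel N v : nat) : nat :=
  match fuel with
  | 0 => v
  | S fu => if (pw N - N <= v)%N then (pw N - v)%N else g fu (pw N - N - 1) v
  end.

Lemma pw_bounds {N} : (0 < N)%N -> (N < pw N)%N /\ (pw N <= 2 * N)%N.
Proof.
move=> hN; rewrite /pw; split; first exact: trunc_log_ltn.
rewrite expnS leq_mul2l /=; exact: trunc_logP.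
Qed.

Lemma key N w u : (0 < N)%N -> (pw N <= 2 * w)%N -> (1 <= u <= N)%N -> (w <= N)%N ->
  is_pow2 (w + u) -> u = (pw N - w)%N.
Proof.
move=> hN hw hu hwN [f hf].
have h0 := trunc_logP (isT : (1 < 2)%N) hN.
have h3 := trunc_log_ltn N (isT : (1 < 2)%N).
move: hw; rewrite /pw => hw.
set e := trunc_log 2 N in h0 h3 hw *.
have h1 : (2 ^ e < 2 ^ f)%N.
  rewrite -hf; move: hw; rewrite expnS; lia.
have h2 : (2 ^ f < 2 ^ e.+2)%N.
  rewrite -hf; move: h3; rewrite !expnS; lia.
rewrite ltn_exp2l // in h1; rewrite ltn_exp2l // in h2.
have hfe : f = e.+1 by lia.
rewrite /pw -/e -hfe -hf; lia.
Qed.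

Lemma g_ok fuel : forall N, (N <= fuel)%N -> forall v, (1 <= v <= N)%N ->
  [/\ (1 <= g fuel N v <= N)%N, g fuel N (g fuel N v) = v & is_pow2 (v + g fuel N v)].
Proof.
elim: fuel => [|fu IH] N hN v hv; first lia.
have hN0 : (0 < N)%N by lia.
have [hp1 hp2] := pw_bounds (N:=N) hN0.
have E1 : forall w, (pw N - N <= w)%N -> g fu.+1 N w = (pw N - w)%N.
  by move=> w hw; rewrite /= hw.
have E2 : forall w, ~~ (pw N - N <= w)%N -> g fu.+1 N w = g fu (pw N - N - 1) w.
  by move=> w hw; rewrite /= (negbTE hw).
case: (boolP (pw N - N <= v)%N) => hv2.
  rewrite !E1 //; last lia.
  split; [lia | lia | exists (trunc_log 2 N).+1; rewrite -/(pw N); lia].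
rewrite E2 //.
have [h1 h2 h3] := IH (pw N - N - 1)%N ltac:(lia) v ltac:(lia).
rewrite E2; last lia.
split => //; lia.
Qed.

Lemma g_uniq fuel : forall N, (N <= fuel)%N -> forall s s' : nat -> nat,
  (forall v, (1 <= v <= N)%N -> [/\ (1 <= s v <= N)%N, (1 <= s' v <= N)%N,
      s' (s v) = v, s (s' v) = v & is_pow2 (v + s v)]) ->
  forall v, (1 <= v <= N)%N -> s v = g fuel N v.
Proof.
elim: fuel => [|fu IH] N hN s s' H v hv; first lia.
have hN0 : (0 < N)%N by lia.
have [hp1 hp2] := pw_bounds (N:=N) hN0.
have E1 : forall w, (pw N - N <= w)%N -> g fu.+1 N w = (pw N - w)%N.
  by move=> w hw; rewrite /= hw.
have E2 : forall w, ~~ (pw N - N <= w)%N -> g fu.+1 N w = g fu (pw N - N - 1) w.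
  by move=> w hw; rewrite /= (negbTE hw).
have A : forall v, (pw N - N <= v <= N)%N -> s v = (pw N - v)%N.
  move=> u hu.
  have [hs1 hs2 hs3 hs4 hs5] := H u ltac:(lia).
  case: (leqP (pw N) (2 * u)) => hu2; first by apply: key => //; lia.
  set w := (pw N - u)%N.
  have [hq1 hq2 hq3 hq4 hq5] := H w ltac:(lia).
  have [ht1 ht2 ht3 ht4 ht5] := H (s' w) ltac:(lia).
  have : s' w = (pw N - w)%N.
    apply: key => //; try lia.
    by rewrite addnC; move: ht5; rewrite hq4.
  move=> hsw.
  have -> : u = s' w by move: hsw; rewrite /w; lia.
  by rewrite hq4.
case: (boolP (pw N - N <= v)%N) => hv2.
  by rewrite E1 // A //; lia.
rewrite E2 //.
set m := (pw N - N - 1)%N.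
apply: (IH m ltac:(lia) s s') => //; last lia.
move=> u hu.
have [hs1 hs2 hs3 hs4 hs5] := H u ltac:(lia).
have B1 : (s u <= m)%N.
  rewrite leqNgt; apply/negP => hc.
  have := A (pw N - s u)%N ltac:(lia).
  have -> : (pw N - (pw N - s u))%N = s u by lia.
  move=> /(congr1 s') ; rewrite hs3.
  have [hr1 hr2 hr3 hr4 hr5] := H (pw N - s u)%N ltac:(lia).
  rewrite hr3; lia.
have B2 : (s' u <= m)%N.
  rewrite leqNgt; apply/negP => hc.
  have := A (s' u) ltac:(lia).
  rewrite hs4; lia.
split => //; lia.
Qed.
Local Open Scope ring_scope.

Definition pow2b (q : nat) : bool := (2 ^ trunc_log 2 q == q)%N.
Lemma pow2bP q : reflect (is_pow2 q) (pow2b q).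
Proof.
apply: (iffP eqP) => [<-|[e ->]]; first by exists (trunc_log 2 q).
by rewrite trunc_expnK.
Qed.

Definition Bm n : 'M['F_2]_n := \matrix_(i, j) (pow2b (i + j + 2))%:R.

Lemma F2m1 : (-1 : 'F_2) = 1. Proof. by apply/val_inj. Qed.

Lemma detB n : \det (Bm n) = 1.
Proof.
case: n => [|n]; first by rewrite det_mx00.

have hg := @g_ok n.+1 n.+1 (leqnn n.+1).
pose f (i : 'I_n.+1) : 'I_n.+1 := inord (g n.+1 n.+1 i.+1).-1.
have fE : forall i : 'I_n.+1, (f i).+1 = g n.+1 n.+1 i.+1.
  move=> i; have [h1 _ _] := hg i.+1 ltac:(have := ltn_ord i; lia).
  rewrite inordK; lia.
have f_inj : injective f.
  move=> i j hij; apply/val_inj.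
  have [_ h2 _] := hg i.+1 ltac:(have := ltn_ord i; lia).
  have [_ h3 _] := hg j.+1 ltac:(have := ltn_ord j; lia).
  have : g n.+1 n.+1 i.+1 = g n.+1 n.+1 j.+1 by rewrite -!fE hij.
  by move=> /(congr1 (g n.+1 n.+1)); rewrite h2 h3 => -[].
pose s0 := perm f_inj.
rewrite /determinant (bigD1 s0) //=.
rewrite [X in _ * X + _]big1 ?mulr1; last first.
  move=> i _; rewrite mxE permE.
  have [_ _ h3] := hg i.+1 ltac:(have := ltn_ord i; lia).
  have -> : (i + f i + 2 = i.+1 + g n.+1 n.+1 i.+1)%N by rewrite -fE; lia.
  by move/pow2bP: h3 => ->.
rewrite F2m1 expr1n big1 ?addr0 // => s hs.
case: (boolP [forall i : 'I_n.+1, pow2b (i + s i + 2)]) => hv; last first.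
  move/forallPn: hv => [i hi].
  by rewrite (bigD1 i) //= mxE (negbTE hi) mul0r mulr0.
exfalso; move/eqP: hs; apply.
pose S v := (s (inord v.-1) : nat).+1.
pose S' v := (((s^-1)%g (inord v.-1)) : nat).+1.
have hu := @g_uniq n.+1 n.+1 (leqnn n.+1) S S'.
have : forall v, (1 <= v <= n.+1)%N -> S v = g n.+1 n.+1 v.
  apply: hu => v hv1.
  have hi : (inord v.-1 : 'I_n.+1) = v.-1 :> nat by rewrite inordK; lia.
  split.
  - by rewrite /S; have := ltn_ord (s (inord v.-1)); lia.
  - by rewrite /S'; have := ltn_ord ((s^-1)%g (inord v.-1)); lia.
  - by rewrite /S /S' /= inord_val permK hi; lia.
  - by rewrite /S /S' /= inord_val permKV hi; lia.
  - apply/pow2bP; move/forallP: hv => /(_ (inord v.-1)).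
    by rewrite hi /S; have -> : (v.-1 + s (inord v.-1) + 2 = v + (s (inord v.-1)).+1)%N by lia.
move=> hS; apply/permP => i; apply/val_inj.
have := hS i.+1 ltac:(have := ltn_ord i; lia).
rewrite -(fE i) /S /= inord_val permE; lia.
Qed.

Lemma F2int (z : int) : (z%:~R : 'F_2) = (~~ (2 %| z)%Z)%:R.
Proof.
rewrite {1}(divz_eq z 2) rmorphD rmorphM /=.
rewrite (_ : (2%:~R : 'F_2) = 0) ?mulr0 ?add0r; last by apply/val_inj.
have [h|h] : (z %% 2 = 0 \/ z %% 2 = 1)%Z by lia.
  by rewrite h (introT dvdz_mod0P h).
rewrite h; case: (boolP (2 %| z)%Z) => // /dvdz_mod0P; lia.
Qed.

Lemma two_dvd k : (2%:Z %| (2 * k)%N%:Z)%Z.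
Proof. apply/dvdz_mod0P; lia. Qed.

Theorem lemma2p3 (k : nat) (x : nat -> int)
  (hk : (0 < k)%N)
  (hx0 : x 0%N = 1)
  (hdiv : forall i : nat, (1 <= i)%N -> ((2 * k)%N%:Z %| x i)%Z)
  (hpow : forall i : nat, (1 <= i)%N -> (((4 * k)%N%:Z %| x i)%Z <-> ~ is_pow2 i)) :
  forall n : nat, exists m : int,
    ~~ (2%:Z %| m)%Z /\ \det (hankel x n) = ((2 * k)%N%:Z) ^+ n * m.
Proof.
move=> n.
set c : int := (2 * k)%N%:Z.
pose y l := (x l %/ c)%Z.
pose K : 'M[int]_n.+1 := \matrix_(i, j) (if (i == 0 :> nat) then x (i + j)%N else y (i + j)%N).
pose d : 'rV[int]_n.+1 := \row_i (if (i == 0 :> nat) then 1 else c).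
have HK : hankel x n = diag_mx d *m K.
  apply/matrixP => i j; rewrite mul_diag_mx !mxE.
  case: eqP => hi; first by rewrite mul1r.
  by rewrite mulrC /y divzK //; apply: hdiv; lia.
have Hd : \det (diag_mx d) = c ^+ n.
  rewrite det_diag big_ord_recl !mxE /= mul1r.
  rewrite (eq_bigr (fun _ => c)) ?prodr_const ?card_ord // => i _.
  by rewrite mxE.
exists (\det K); split; last by rewrite HK det_mulmx Hd.
have hc0 : c != 0 by rewrite /c; apply/eqP; lia.
have hy : forall l, (1 <= l)%N -> ((y l)%:~R : 'F_2) = (pow2b l)%:R.
  move=> l hl; rewrite F2int; congr (_ %:R).
  have hxl : x l = y l * c by rewrite /y divzK //; apply: hdiv.
  have h4 : (4 * k)%N%:Z = 2 * c by rewrite /c -PoszM; congr Posz; lia.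
  have := hpow l hl; rewrite hxl h4 dvdz_mul2r //.
  case: pow2bP => H1; case: (boolP (2 %| y l)%Z) => H2 //= [h1 h2].
  - by case: (h1 isT).
  - by move: (h2 H1).
have Hdet : ((\det K)%:~R : 'F_2) = 1.
  rewrite -det_map_mx (expand_det_row _ ord0) big_ord_recl.
  rewrite big1 ?addr0; last first.
    move=> j _; rewrite !mxE /= F2int.
    rewrite (dvdz_trans (two_dvd k) (hdiv _ _)) ?mul0r //.
  rewrite !mxE /= add0n hx0 rmorph1 mul1r /cofactor expr0 mul1r.
  rewrite -[RHS](detB n); congr (\det _).
  apply/matrixP => i j; rewrite !mxE /= hy //.
  by congr ((pow2b _)%:R); rewrite /bump /=; lia.
rewrite F2int in Hdet; apply/negP => H; move: Hdet; rewrite H /=.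
by move/eqP; rewrite eq_sym oner_eq0.
Qed.
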